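(* Let $P$ be a finite poset and $R$ a commutative unital ring. Then there is an isomorphism of $R$-algebras $$Z^3_2(P,R)/Z^3_3(P,R)\cong\bigoplus_{x,y\in P,\ l(x,y)=1}R(e_{xxy}+e_{xyy}),$$ where the right-hand side is the direct sum of algebras (coordinatewise multiplication) and each $R(e_{xxy}+e_{xyy})$ is the subalgebra of $I^3(P,R)$ spanned by the idempotent $e_{xxy}+e_{xyy}$.
   Context: For a finite poset $P$, $P^3_\le=\{(x,y,z)\in P^3: x\le y\le z\}$, and $I^3(P,R)$ is the $R$-module of functions $f:P^3_\le\to R$ with multiplication $(fg)(x_1,x_2,x_3)=\sum f(x_1,y_1,y_2)g(y_1,y_2,x_3)$ over all $x_1\le y_1\le x_2\le y_2\le x_3$. For $x\le y\le z$, $e_{xyz}$ is the function equal to $1$ at $(x,y,z)$ and $0$ elsewhere. For $a\le b$, $l(a,b)$ is the maximum of $|C|-1$ over chains $C$ in the interval $[a,b]$. $J^3_1(P,R)=\{f: f(x,x,x)=0\ \forall x\}$. $[f,g]=fg-gf$; $[U,V]$ is the $R$-submodule spanned by all $[u,v]$, $u\in U,v\in V$. $Z^3_1(P,R)=J^3_1(P,R)$, $Z^3_2(P,R)=[Z^3_1(P,R),Z^3_1(P,R)]$, $Z^3_3(P,R)=[Z^3_2(P,R),Z^3_2(P,R)]$; $Z^3_3(P,R)$ is an ideal of the algebra $Z^3_2(P,R)$, and the quotient carries the induced multiplication. *)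

(* Defs.v *)
From HB Require Import structures.
From mathcomp Require Import all_boot all_order all_algebra.
Set Implicit Arguments.
Unset Strict Implicit.
Unset Printing Implicit Defensive.
Import Order.TTheory GRing.Theory.
Local Open Scope order_scope.

Section IncidenceCube.
Variables (d : Order.disp_t) (P : finPOrderType d) (R : comPzRingType).

Definition chain3 (t : P * P * P) : bool := (t.1.1 <= t.1.2) && (t.1.2 <= t.2).
Definition T3 := {t : P * P * P | chain3 t}.

Definition I3 := {ffun T3 -> R}.

(* value of f at (x,y,z), 0 if (x,y,z) is not in P^3_<= *)
Definition ev (f : I3) (x y z : P) : R :=
  if insub (x, y, z) is Some t then f t else 0%R.

Definition i3add (f g : I3) : I3 := [ffun t => (f t + g t)%R].
Definition i3opp (f : I3) : I3 := [ffun t => (- f t)%R].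
Definition i3scale (c : R) (f : I3) : I3 := [ffun t => (c * f t)%R].
Definition i3zero : I3 := [ffun t => 0%R].

Definition i3mul (f g : I3) : I3 :=
  [ffun t : T3 => let: (x1, x2, x3) := val t in
     (\sum_(y1 : P) \sum_(y2 : P |
        [&& (x1 <= y1)%O, (y1 <= x2)%O, (x2 <= y2)%O & (y2 <= x3)%O])
        ev f x1 y1 y2 * ev g y1 y2 x3)%R].

Definition i3comm (f g : I3) : I3 := i3add (i3mul f g) (i3opp (i3mul g f)).

Definition e3 (x y z : P) : I3 := [ffun t : T3 => ((val t == (x, y, z)) : nat)%:R%R].

Definition span3 (S : I3 -> Prop) (f : I3) : Prop :=
  exists (n : nat) (c : 'I_n -> R) (s : 'I_n -> I3),
    (forall i, S (s i)) /\
    f = \big[i3add/i3zero]_(i < n) i3scale (c i) (s i).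

Definition commsp (U V : I3 -> Prop) : I3 -> Prop :=
  span3 (fun h => exists u v, U u /\ V v /\ h = i3comm u v).

Definition J31 (f : I3) : Prop := forall x : P, ev f x x x = 0%R.
Definition Z31 : I3 -> Prop := J31.
Definition Z32 : I3 -> Prop := commsp Z31 Z31.
Definition Z33 : I3 -> Prop := commsp Z32 Z32.

Definition is_chain (C : {set P}) : bool :=
  [forall x in C, forall y in C, (x <= y) || (y <= x)].
Definition lgth (a b : P) : nat :=
  (\max_(C : {set P} | (C \subset [set z | (a <= z)%O && (z <= b)%O]) && is_chain C)
     #|C|.-1)%N.

Definition cov1 (p : P * P) : bool := lgth p.1 p.2 == 1%N.
Definition Cov := {p : P * P | cov1 p}.

Definition gen (k : Cov) : I3 :=
  let: (x, y) := val k in i3add (e3 x x y) (e3 x y y).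

Definition inRgen (k : Cov) (h : I3) : Prop := exists c : R, h = i3scale c (gen k).

(* An R-algebra isomorphism  Z2/Z3 ~= (+)_k R(gen k), presented as a map
   phi : Z2 -> (+)_k R(gen k) (componentwise) which is R-linear,
   multiplicative (coordinatewise product in the direct sum), onto,
   and has kernel exactly Z3. *)
Definition quot_iso (phi : I3 -> {ffun Cov -> I3}) : Prop :=
  [/\ (forall f, Z32 f -> forall k, inRgen k (phi f k)),
      (forall c f g, Z32 f -> Z32 g ->
         phi (i3add (i3scale c f) g) =
         [ffun k => i3add (i3scale c (phi f k)) (phi g k)]),
      (forall f g, Z32 f -> Z32 g ->
         phi (i3mul f g) = [ffun k => i3mul (phi f k) (phi g k)]),
      (forall h : {ffun Cov -> I3}, (forall k, inRgen k (h k)) ->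
         exists2 f, Z32 f & phi f = h)
    & (forall f, Z32 f -> (phi f = [ffun k => i3zero] <-> Z33 f))].

End IncidenceCube.

(* Main.v *)
Require Import Defs.
From mathcomp Require Import all_boot all_order all_algebra.
Set Implicit Arguments.
Unset Strict Implicit.
Unset Printing Implicit Defensive.
Import Order.TTheory GRing.Theory.
Local Open Scope ring_scope.
Local Open Scope order_scope.

Section Work.
Variables (d : Order.disp_t) (P : finPOrderType d) (R : comPzRingType).
Local Notation I3 := (I3 P R).
Local Notation ev := (@ev d P R).
Local Notation E3 := (@e3 d P R).
Local Notation Zero := (i3zero P R).
Local Notation Add := (@i3add d P R).

Definition ind (b : bool) : R := (b : nat)%:R.
Lemma ind_mul (a b : bool) : ind a * ind b = ind (a && b).
Proof. by case: a; case: b; rewrite /ind /= ?mul1r ?mul0r. Qed.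
Lemma ind0 (b : bool) : ~~ b -> ind b = 0.
Proof. by case: b. Qed.
Lemma ind1 (b : bool) : b -> ind b = 1.
Proof. by case: b. Qed.

Lemma i3addE (f g : I3) : i3add f g = (f + g)%R.
Proof. by apply/ffunP => t; rewrite !ffunE. Qed.
Lemma i3zeroE : Zero = 0%R.
Proof. by apply/ffunP => t; rewrite !ffunE. Qed.
Lemma bigI3E n (F : 'I_n -> I3) : \big[Add/Zero]_(i < n) F i = (\sum_(i < n) F i)%R.
Proof. by apply: (big_rec2 (fun a b => a = b)) => [|i y1 y2 _ ->]; rewrite ?i3zeroE ?i3addE. Qed.

Lemma ev_chain (f : I3) x y z (h : chain3 (x, y, z)) : ev f x y z = f (exist _ (x, y, z) h).
Proof. by rewrite /Defs.ev insubT. Qed.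
Lemma ev_nchain (f : I3) x y z : ~~ chain3 (x, y, z) -> ev f x y z = 0.
Proof. by move=> h; rewrite /Defs.ev insubF //; apply/negbTE. Qed.
Lemma ev_eq (f g : I3) : (forall x y z, chain3 (x, y, z) -> ev f x y z = ev g x y z) -> f = g.
Proof.
move=> H; apply/ffunP => [[[[x y] z] h]].
by have := H x y z h; rewrite !(ev_chain _ h).
Qed.
Lemma ev_add (f g : I3) x y z : ev (i3add f g) x y z = ev f x y z + ev g x y z.
Proof. by rewrite /Defs.ev; case: insub => [t|]; rewrite ?ffunE ?addr0. Qed.
Lemma ev_opp (f : I3) x y z : ev (i3opp f) x y z = - ev f x y z.
Proof. by rewrite /Defs.ev; case: insub => [t|]; rewrite ?ffunE ?oppr0. Qed.
Lemma ev_scale c (f : I3) x y z : ev (i3scale c f) x y z = c * ev f x y z.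
Proof. by rewrite /Defs.ev; case: insub => [t|]; rewrite ?ffunE ?mulr0. Qed.
Lemma ev_zero x y z : ev (Zero) x y z = 0.
Proof. by rewrite /Defs.ev; case: insub => [t|]; rewrite ?ffunE. Qed.
Lemma ev_comm (f g : I3) x y z : ev (i3comm f g) x y z = ev (i3mul f g) x y z - ev (i3mul g f) x y z.
Proof. by rewrite /i3comm ev_add ev_opp. Qed.
Lemma ev_big (I : Type) (r : seq I) (Q : pred I) (F : I -> I3) x y z :
  ev (\big[Add/Zero]_(i <- r | Q i) F i) x y z = \sum_(i <- r | Q i) ev (F i) x y z.
Proof.
apply: (big_morph (fun f => ev f x y z)); first by move=> f g; rewrite ev_add.
exact: ev_zero.
Qed.
Lemma ev_e3 a b c x y z : ev (E3 a b c) x y z = ind [&& chain3 (x, y, z), x == a, y == b & z == c].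
Proof.
case: (boolP (chain3 (x, y, z))) => h; last by rewrite ev_nchain.
by rewrite ev_chain ffunE /= /ind !xpair_eqE andbA.
Qed.
Lemma ev_mul (f g : I3) (x1 x2 x3 : P) : chain3 (x1, x2, x3) ->
  ev (i3mul f g) x1 x2 x3 =
  \sum_(y1 : P | (x1 <= y1) && (y1 <= x2)) \sum_(y2 : P | (x2 <= y2)%O && (y2 <= x3)%O)
     ev f x1 y1 y2 * ev g y1 y2 x3.
Proof.
move=> h; rewrite ev_chain ffunE /=.
rewrite [RHS]big_mkcond; apply: eq_bigr => y1 _.
case: (x1 <= y1) => /=; case: (y1 <= x2) => /=; try by rewrite big_pred0.
by apply: eq_bigl.
Qed.

Lemma chain3E (x y z : P) : chain3 (x, y, z) = (x <= y) && (y <= z).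
Proof. by []. Qed.

Lemma sum_eq1 (I : finType) (Q : pred I) (F : I -> R) b :
  (forall y, Q y -> y != b -> F y = 0) -> \sum_(y | Q y) F y = if Q b then F b else 0.
Proof.
move=> H; case: ifP => Qb.
  rewrite (bigD1 b) //= big1 ?addr0 // => y /andP[Qy yb]; exact: H.
rewrite big1 // => y Qy; apply: H => //; apply/negP => /eqP e; by rewrite -e Qy in Qb.
Qed.

Lemma ev_mul1 (f g : I3) (x1 x2 x3 b c : P) : chain3 (x1, x2, x3) ->
  (forall y1 y2, x1 <= y1 -> y1 <= x2 -> x2 <= y2 -> y2 <= x3 -> (y1 != b) || (y2 != c) ->
     ev f x1 y1 y2 * ev g y1 y2 x3 = 0) ->
  ev (i3mul f g) x1 x2 x3 =
  if [&& x1 <= b, b <= x2, x2 <= c & c <= x3] then ev f x1 b c * ev g b c x3 else 0.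
Proof.
move=> h H; rewrite ev_mul // (@sum_eq1 _ _ _ b).
  case h1: (x1 <= b) => //=; case h2: (b <= x2) => //=.
  rewrite (@sum_eq1 _ _ _ c); first by [].
  by move=> y2 /andP[h3 h4] ne; apply: H; rewrite ?ne ?orbT.
move=> y1 /andP[h1 h2] ne; rewrite big1 // => y2 /andP[h3 h4].
by apply: H => //; rewrite ne.
Qed.

Lemma ev_mul0 (f g : I3) (x1 x2 x3 : P) : chain3 (x1, x2, x3) ->
  (forall y1 y2, x1 <= y1 -> y1 <= x2 -> x2 <= y2 -> y2 <= x3 ->
     ev f x1 y1 y2 * ev g y1 y2 x3 = 0) ->
  ev (i3mul f g) x1 x2 x3 = 0.
Proof.
move=> h H; rewrite ev_mul // big1 // => y1 /andP[h1 h2]; rewrite big1 // => y2 /andP[h3 h4].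
exact: H.
Qed.

Lemma ind_if (c p : bool) : (if c then ind p else 0) = ind (c && p).
Proof. by case: c. Qed.

Ltac killE := match goal with H : (?x == ?x) = false |- _ =>
  let H' := fresh in move/negbT/eqP: H => H'; case: (H' erefl) end.
Ltac eqcase0 := repeat (rewrite ?eqxx; match goal with |- context [?x == ?y] =>
   let E := fresh "E" in case E: (x == y); [move/eqP: E => E; subst|try (move/negbT/eqP: E => E; by case: (E erefl))] end).

Ltac eqcase := eqcase0; try killE.

Definition X (a b : P) : I3 := i3comm (E3 a a b) (E3 a b b).

Lemma evX a b x y z : a < b -> ev (X a b) x y z = ind [&& chain3 (x, y, z), x == a & z == b].
Proof.
move=> ab; case: (boolP (chain3 (x, y, z))) => h; last by rewrite ev_nchain.
rewrite ev_comm (ev_mul1 (b:=a) (c:=b)) // ?(@ev_mul0 (E3 a b b)) //.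
- rewrite !ev_e3 !ind_mul subr0 ind_if; congr ind.
  move: h; rewrite /chain3 /= => /andP[h1 h2].
  eqcase; rewrite ?andbF ?andbT //= ?lexx ?h1 ?h2 ?(ltW ab) //.
- move=> y1 y2 _ _ _ _; rewrite !ev_e3 ind_mul; apply: ind0.
  apply/negP => /andP[/and4P[_ _ /eqP e1 _] /and4P[_ /eqP e2 _ _]].
  by move: ab; rewrite -e2 e1 ltxx.
- move=> y1 y2 _ _ _ _ ne; rewrite !ev_e3 ind_mul; apply: ind0.
  apply/negP => /andP[/and4P[_ _ /eqP e1 /eqP e2] _].
  by rewrite e1 e2 !eqxx in ne.
Qed.

Lemma is_chain3 (x m y : P) : x <= m -> m <= y -> is_chain [set x; m; y].
Proof.
move=> h1 h2; have h3 := le_trans h1 h2.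
apply/forallP => u; apply/implyP; rewrite !inE; case/orP => [/orP[]|] /eqP->;
apply/forallP => v; apply/implyP; rewrite !inE; case/orP => [/orP[]|] /eqP->;
by rewrite ?lexx ?h1 ?h2 ?h3 ?orbT.
Qed.

Lemma cov_int (x y m : P) : cov1 (x, y) -> x <= m -> m <= y -> (m == x) || (m == y).
Proof.
rewrite /cov1 /= => /eqP hl h1 h2.
case: (boolP (m == x)) => //= mx; apply/negPn/negP => my.
have xy : x != y by apply: contraNneq mx => exy; rewrite eq_le h1 exy h2.
have : (2 <= lgth x y)%N.
  rewrite /lgth; apply: (@leq_trans (#|[set x; m; y]|.-1)); last first.
    apply: (leq_bigmax_cond (F := fun C : {set P} => #|C|.-1)).
    rewrite is_chain3 // andbT; apply/subsetP => u; rewrite !inE.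
    by case/orP => [/orP[]|] /eqP ->; rewrite ?lexx ?h1 ?h2 ?(le_trans h1 h2).
  rewrite setUC cardsU1 cards2.
  rewrite !inE negb_or eq_sym xy eq_sym my eq_sym mx. done.
by rewrite hl.
Qed.

Lemma cov_lt (x y : P) : cov1 (x, y) -> x < y.
Proof.
rewrite /cov1 /= => /eqP hl; apply/negPn/negP => nxy.
suff : (lgth x y <= 0)%N by rewrite hl.
apply/bigmax_leqP => C /andP[sC _].
have : (#|C| <= #|[set x]|)%N.
  apply: subset_leq_card; apply/subsetP => z zC.
  move/subsetP: sC => /(_ z zC); rewrite !inE => /andP[h1 h2].
  have exy : x = y.
    by apply/eqP; move: nxy; rewrite lt_neqAle (le_trans h1 h2) andbT negbK.
  by rewrite eq_le h1 exy h2.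
by rewrite cards1; case: #|C| => [|[]].
Qed.

Lemma cov_intro (x y : P) : x < y -> (forall m, x < m -> m < y -> False) -> cov1 (x, y).
Proof.
move=> xy H; rewrite /cov1 /= /lgth eqn_leq; apply/andP; split.
  apply/bigmax_leqP => C /andP[sC _].
  have : (#|C| <= #|[set x; y]|)%N.
    apply: subset_leq_card; apply/subsetP => z zC.
    move/subsetP: sC => /(_ z zC); rewrite !inE => /andP[h1 h2].
    case: (boolP (z == x)) => //= zx; case: (boolP (z == y)) => //= zy.
    by case: (H z); rewrite lt_neqAle ?h1 ?h2 ?andbT // eq_sym.
  rewrite cards2 => h; have h2 : (#|C| <= 2)%N by apply: (leq_trans h); case: (x != y).
  by move: h2; case: #|C| => [|[|[|]]].
apply: (@leq_trans (#|[set x; y]|.-1)); first by rewrite cards2 lt_eqF.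
apply: (leq_bigmax_cond (F := fun C : {set P} => #|C|.-1)).
apply/andP; split.
  apply/subsetP => u; rewrite !inE.
  by case/orP => /eqP ->; rewrite ?lexx ?(ltW xy).
apply/forallP => u; apply/implyP; rewrite !inE; case/orP => /eqP->;
apply/forallP => v; apply/implyP; rewrite !inE; case/orP => /eqP->;
by rewrite ?lexx ?(ltW xy) ?orbT.
Qed.

Lemma sum_eq2 (I : finType) (Q : pred I) (F : I -> R) a b : a != b -> Q a -> Q b ->
  (forall y, Q y -> y != a -> y != b -> F y = 0) -> \sum_(y | Q y) F y = F a + F b.
Proof.
move=> ab Qa Qb H; rewrite (bigD1 a) //=; congr (_ + _).
rewrite (@sum_eq1 _ _ _ b) /=; first by rewrite Qb eq_sym ab.
by move=> y /andP[Qy ya] yb; apply: H.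
Qed.

Lemma mul_xxx (u v : I3) x : ev (i3mul u v) x x x = ev u x x x * ev v x x x.
Proof.
rewrite (ev_mul1 (b:=x) (c:=x)) ?chain3E ?lexx //.
move=> y1 y2 h1 h2 h3 h4; have e1 : y1 = x by apply/eqP; rewrite eq_le h1 h2.
have e2 : y2 = x by apply/eqP; rewrite eq_le h3 h4.
by rewrite e1 e2 eqxx.
Qed.

Lemma mul_xxy (u v : I3) x y : cov1 (x, y) ->
  ev (i3mul u v) x x y = ev u x x x * ev v x x y + ev u x x y * ev v x y y.
Proof.
move=> c; have xy := cov_lt c.
rewrite ev_mul ?chain3E ?lexx ?(ltW xy) // (@sum_eq1 _ _ _ x) ?lexx /=; last first.
  by move=> y1 /andP[h1 h2] ne; move: ne; rewrite eq_le h1 h2.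
rewrite (@sum_eq2 _ _ _ x y) ?lt_eqF ?lexx ?(ltW xy) //.
move=> y2 /andP[h1 h2] n1 n2; move: (cov_int c h1 h2); by rewrite (negbTE n1) (negbTE n2).
Qed.

Lemma mul_xyy (u v : I3) x y : cov1 (x, y) ->
  ev (i3mul u v) x y y = ev u x x y * ev v x y y + ev u x y y * ev v y y y.
Proof.
move=> c; have xy := cov_lt c.
rewrite ev_mul ?chain3E ?lexx ?(ltW xy) //.
rewrite (eq_bigr (fun y1 => ev u x y1 y * ev v y1 y y)); last first.
  move=> y1 _; rewrite (@sum_eq1 _ _ _ y) ?lexx //.
  by move=> y2 /andP[h1 h2] ne; move: ne; rewrite eq_le h1 h2.
rewrite (@sum_eq2 _ _ _ x y) ?lt_eqF ?lexx ?(ltW xy) //.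
move=> y1 /andP[h1 h2] n1 n2; move: (cov_int c h1 h2); by rewrite (negbTE n1) (negbTE n2).
Qed.

Section Span.
Variable S : I3 -> Prop.

Lemma span3_ind (Q : I3 -> Prop) : Q Zero -> (forall f g, Q f -> Q g -> Q (i3add f g)) ->
  (forall c f, Q f -> Q (i3scale c f)) -> (forall f, S f -> Q f) ->
  forall f, span3 S f -> Q f.
Proof.
move=> Q0 QD QZ QS f [n [c [s [Hs ->]]]].
by apply: (big_ind Q) => // i _; apply: QZ; apply: QS.
Qed.

Lemma span3_gen f : S f -> span3 S f.
Proof.
move=> Sf; exists 1%N, (fun _ => 1), (fun _ => f); split => //.
rewrite big_ord_recl big_ord0; apply/ffunP => t; rewrite !ffunE mul1r addr0 //.
Qed.

Lemma span3_zero : span3 S Zero.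
Proof. by exists 0%N, (fun _ => 0), (fun _ => Zero); split => [[]//|]; rewrite big_ord0. Qed.

Definition catf (T : Type) n1 n2 (A : 'I_n1 -> T) (B : 'I_n2 -> T) (i : 'I_(n1 + n2)) : T :=
  match split i with inl j => A j | inr j => B j end.

Lemma span3_add f g : span3 S f -> span3 S g -> span3 S (i3add f g).
Proof.
move=> [n1 [c1 [s1 [H1 ->]]]] [n2 [c2 [s2 [H2 ->]]]].
exists (n1 + n2)%N, (catf c1 c2), (catf s1 s2); split.
  by move=> i; rewrite /catf; case: (split i).
rewrite !bigI3E i3addE big_split_ord; congr (_ + _); apply: eq_bigr => i _;
  rewrite /catf.
  by rewrite -[lshift n2 i]/(unsplit (inl i)) unsplitK.
by rewrite -[rshift n1 i]/(unsplit (inr i)) unsplitK.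
Qed.

Lemma span3_scale c f : span3 S f -> span3 S (i3scale c f).
Proof.
move=> [n [c1 [s1 [H1 ->]]]]; exists n, (fun i => c * c1 i), s1; split => //.
rewrite (big_morph (i3scale c) (op1 := Add) (id1 := Zero)).
- by apply: eq_bigr => i _; apply/ffunP => t; rewrite !ffunE mulrA.
- by move=> u v; apply/ffunP => t; rewrite !ffunE mulrDr.
- by apply/ffunP => t; rewrite !ffunE mulr0.
Qed.

Lemma span3_big (I : finType) (Q : pred I) (F : I -> I3) :
  (forall i, Q i -> span3 S (F i)) -> span3 S (\big[Add/Zero]_(i | Q i) F i).
Proof.
move=> H; apply: (big_ind (span3 S)) => //; [exact: span3_zero | exact: span3_add].
Qed.
End Span.

Definition good (f : I3) := (forall x, ev f x x x = 0) /\
  (forall x y, cov1 (x, y) -> ev f x x y = ev f x y y).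

Lemma good_span (Sg : I3 -> Prop) : (forall f, Sg f -> good f) -> forall f, span3 Sg f -> good f.
Proof.
move=> H; apply: span3_ind => //.
- by split => [x|x y _]; rewrite !ev_zero.
- move=> f g [f1 f2] [g1 g2]; split => [x|x y c]; rewrite !ev_add ?f1 ?g1 ?addr0 //.
  by rewrite f2 // g2.
- move=> c f [f1 f2]; split => [x|x y cv]; rewrite !ev_scale ?f1 ?mulr0 //.
  by rewrite f2.
Qed.

Lemma Z32_good f : Z32 f -> good f.
Proof.
apply: good_span => h [u [v [hu [hv ->]]]]; split => [x|x y c].
  by rewrite ev_comm !mul_xxx hu mul0r mulr0 subrr.
by rewrite !ev_comm mul_xxy // mul_xyy // mul_xxy // mul_xyy // !hu !hv !mul0r !mulr0 !add0r !addr0.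
Qed.

Lemma Z33_zero f : Z33 f -> forall x y, cov1 (x, y) -> ev f x x y = 0.
Proof.
move=> Zf x y c; move: f Zf; apply: span3_ind.
- by rewrite ev_zero.
- by move=> f g f0 g0; rewrite ev_add f0 g0 addr0.
- by move=> k f f0; rewrite ev_scale f0 mulr0.
move=> h [u [v [/Z32_good [u1 u2] [/Z32_good [v1 v2] ->]]]].
by rewrite ev_comm !mul_xxy // u1 v1 !mul0r !add0r -u2 // -v2 // [X in _ - X]mulrC subrr.
Qed.

Lemma le4 (p q : bool) (x y : P) : [&& p, x <= y, y <= x & q] = [&& p, x == y & q].
Proof. by rewrite eq_le; case: p; case: q; rewrite ?andbT ?andbF ?andbA. Qed.

Lemma J31_e3 a b c : a < c -> J31 (E3 a b c).
Proof.
move=> ac x; rewrite ev_e3; apply: ind0; apply/negP => /and4P[_ /eqP e1 _ /eqP e2].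
by move: ac; rewrite -e1 -e2 ltxx.
Qed.

Lemma X_Z32 a b : a < b -> Z32 (X a b).
Proof.
move=> ab; apply: span3_gen; exists (E3 a a b), (E3 a b b).
by split; [|split]; try apply: J31_e3.
Qed.

Lemma comm_XX a b c : a < b -> b < c -> i3comm (X a b) (X b c) = E3 a b c.
Proof.
move=> ab bc; apply: ev_eq => x1 x2 x3 h.
rewrite ev_comm (ev_mul1 (b:=b) (c:=b)) // ?(@ev_mul0 (X b c)) //.
- rewrite !evX // !ev_e3 !ind_mul subr0 ind_if le4; congr ind.
  move: h; rewrite /chain3 /= => /andP[h1 h2].
  eqcase; rewrite ?andbF ?andbT //= ?lexx ?h1 ?h2 ?(ltW ab) ?(ltW bc) //.
- move=> y1 y2 h1 _ _ _; rewrite !evX // ind_mul; apply: ind0.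
  apply/negP => /andP[/and3P[_ /eqP e1 _] /and3P[_ /eqP e2 _]].
  by move: h1; rewrite e1 e2 lt_geF.
- move=> y1 y2 _ _ _ _ ne; rewrite !evX // ind_mul; apply: ind0.
  apply/negP => /andP[/and3P[_ _ /eqP e1] /and3P[_ /eqP e2 _]].
  by move: ne; rewrite e1 e2 !eqxx.
Qed.

Lemma ev_commXl a m d' x1 x2 x3 : a < m -> m < d' -> chain3 (x1, x2, x3) ->
  ev (i3comm (X a m) (X a d')) x1 x2 x3 = ind [&& x1 == a, x3 == d' & x2 <= m].
Proof.
move=> am md h; have ad := lt_trans am md.
rewrite ev_comm (ev_mul1 (b:=a) (c:=m)) // ?(@ev_mul0 (X a d')) //.
- rewrite !evX // !ind_mul subr0 ind_if; congr ind.
  move: h; rewrite /chain3 /= => /andP[h1 h2].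
  eqcase; rewrite ?andbF ?andbT //= ?lexx ?h1 ?h2 ?(ltW am) ?(ltW md) ?(ltW ad) ?andbT //.
- move=> y1 y2 _ _ _ _; rewrite !evX // ind_mul; apply: ind0.
  apply/negP => /andP[/and3P[_ _ /eqP e1] /and3P[/andP[_ hh] _ /eqP e2]].
  by move: hh; rewrite e1 e2 lt_geF.
- move=> y1 y2 _ _ _ _ ne; rewrite !evX // ind_mul; apply: ind0.
  apply/negP => /andP[/and3P[_ _ /eqP e1] /and3P[_ /eqP e2 _]].
  by move: ne; rewrite e1 e2 !eqxx.
Qed.

Lemma ev_commXr a m d' x1 x2 x3 : a < m -> m < d' -> chain3 (x1, x2, x3) ->
  ev (i3comm (X a d') (X m d')) x1 x2 x3 = ind [&& x1 == a, x3 == d' & m <= x2].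
Proof.
move=> am md h; have ad := lt_trans am md.
rewrite ev_comm (ev_mul1 (b:=m) (c:=d')) // ?(@ev_mul0 (X m d')) //.
- rewrite !evX // !ind_mul subr0 ind_if; congr ind.
  move: h; rewrite /chain3 /= => /andP[h1 h2].
  eqcase; rewrite ?andbF ?andbT //= ?lexx ?h1 ?h2 ?(ltW am) ?(ltW md) ?(ltW ad) ?andbT //.
- move=> y1 y2 h1 _ _ _; rewrite !evX // ind_mul; apply: ind0.
  apply/negP => /andP[/and3P[_ /eqP e1 _] /and3P[_ /eqP e2 _]].
  by move: h1; rewrite e1 e2 lt_geF.
- move=> y1 y2 _ _ _ _ ne; rewrite !evX // ind_mul; apply: ind0.
  apply/negP => /andP[/and3P[_ _ /eqP e1] /and3P[_ /eqP e2 _]].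
  by move: ne; rewrite e1 e2 !eqxx.
Qed.

Lemma XX a b : a < b -> i3mul (X a b) (X a b) = X a b.
Proof.
move=> ab; apply: ev_eq => x1 x2 x3 h.
rewrite (ev_mul1 (b:=a) (c:=b)) //.
- rewrite !evX // !ind_mul ind_if; congr ind.
  move: h; rewrite /chain3 /= => /andP[h1 h2].
  eqcase; rewrite ?andbF ?andbT //= ?lexx ?h1 ?h2 ?(ltW ab) ?andbT //.
- move=> y1 y2 _ _ _ _ ne; rewrite !evX // ind_mul; apply: ind0.
  apply/negP => /andP[/and3P[_ _ /eqP e1] /and3P[_ /eqP e2 _]].
  by move: ne; rewrite e1 e2 !eqxx.
Qed.

Lemma gen_X x y : cov1 (x, y) -> i3add (E3 x x y) (E3 x y y) = X x y.
Proof.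
move=> c; have xy := cov_lt c; apply: ev_eq => x1 x2 x3 h.
rewrite ev_add !ev_e3 evX //.
move: (h); rewrite /chain3 /= => /andP[h1 h2].
case: (boolP ((x1 == x) && (x3 == y))) => [/andP[/eqP e1 /eqP e3]|].
  subst x1 x3; rewrite !eqxx !andbT /=.
  case/orP: (cov_int c h1 h2) => /eqP ->; rewrite ?eqxx ?(lt_eqF xy) ?(gt_eqF xy).
    by rewrite lexx (ltW xy) /ind /= addr0.
  by rewrite lexx (ltW xy) /ind /= add0r.
by rewrite negb_and => /orP[] /negbTE ->; rewrite !andbF /ind /= addr0.
Qed.

Lemma E1_Z33 a b c : a < b -> b < c -> Z33 (E3 a b c).
Proof.
move=> ab bc; apply: span3_gen; exists (X a b), (X b c).
by rewrite comm_XX //; split; [|split]; try apply: X_Z32.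
Qed.

Lemma E2_Z33 a m c : a < m -> m < c -> Z33 (E3 a a c).
Proof.
move=> am mc; have ac := lt_trans am mc.
have -> : E3 a a c = i3add (i3comm (X a m) (X a c))
    (i3scale (-1) (\big[Add/Zero]_(x : P | (a < x) && (x <= m)) E3 a x c)).
  apply: ev_eq => x1 x2 x3 h.
  rewrite ev_add ev_commXl // ev_scale ev_big (@sum_eq1 _ _ _ x2); last first.
    move=> y _ ne; rewrite ev_e3; apply: ind0; apply/negP => /and4P[_ _ /eqP e _].
    by move: ne; rewrite e eqxx.
  rewrite !ev_e3 mulN1r ind_if.
  move: (h); rewrite /chain3 /= => /andP[h1 h2].
  eqcase; rewrite ?andbF ?andbT //= ?lexx ?h1 ?h2 ?(ltW am) ?(ltW mc) ?(ltW ac) ?andbT ?ltxx //=.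
  all: rewrite /ind /= ?subr0 //.
  by rewrite lt_def E h1 /= subrr.
apply: span3_add; first by apply: span3_gen; exists (X a m), (X a c); split; [|split]; try apply: X_Z32.
apply: span3_scale; apply: span3_big => x /andP[ax xm]; apply: E1_Z33 => //.
exact: le_lt_trans xm mc.
Qed.

Lemma E3_Z33 a m c : a < m -> m < c -> Z33 (E3 a c c).
Proof.
move=> am mc; have ac := lt_trans am mc.
have -> : E3 a c c = i3add (i3comm (X a c) (X m c))
    (i3scale (-1) (\big[Add/Zero]_(x : P | (m <= x) && (x < c)) E3 a x c)).
  apply: ev_eq => x1 x2 x3 h.
  rewrite ev_add ev_commXr // ev_scale ev_big (@sum_eq1 _ _ _ x2); last first.
    move=> y _ ne; rewrite ev_e3; apply: ind0; apply/negP => /and4P[_ _ /eqP e _].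
    by move: ne; rewrite e eqxx.
  rewrite !ev_e3 mulN1r ind_if.
  move: (h); rewrite /chain3 /= => /andP[h1 h2].
  eqcase; rewrite ?andbF ?andbT //= ?lexx ?h1 ?h2 ?(ltW am) ?(ltW mc) ?(ltW ac) ?andbT ?ltxx //=.
  all: rewrite /ind /= ?subr0 //.
  by rewrite lt_neqAle h2 andbT E andbT subrr.
apply: span3_add; first by apply: span3_gen; exists (X a c), (X m c); split; [|split]; try apply: X_Z32.
apply: span3_scale; apply: span3_big => x /andP[mx xc]; apply: E1_Z33 => //.
exact: lt_le_trans am mx.
Qed.

Lemma decomp (f : I3) :
  f = \big[Add/Zero]_(t : T3 P) i3scale (f t) (E3 (val t).1.1 (val t).1.2 (val t).2).
Proof.
apply: ev_eq => x y z h; rewrite ev_big (@sum_eq1 _ _ _ (exist _ (x, y, z) h)) /=.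
  by rewrite ev_scale ev_e3 h !eqxx /ind /= mulr1 ev_chain.
move=> [[[u v] w] ht] _ ne; rewrite ev_scale ev_e3 ind0 ?mulr0 //=.
apply/negP => /and4P[_ /eqP e1 /eqP e2 /eqP e3]; subst u v w.
by move: ne; rewrite (bool_irrelevance ht h) eqxx.
Qed.

Lemma mul_scale a b (F G : I3) : i3mul (i3scale a F) (i3scale b G) = i3scale (a * b) (i3mul F G).
Proof.
apply: ev_eq => x1 x2 x3 h; rewrite ev_scale !ev_mul // mulr_sumr; apply: eq_bigr => y1 _.
rewrite mulr_sumr; apply: eq_bigr => y2 _; by rewrite !ev_scale mulrACA.
Qed.

Lemma covP (k : Cov P) : cov1 ((val k).1, (val k).2).
Proof. by case: k => [[x y] hk]. Qed.

Lemma gen_E (k : Cov P) : gen R k = X (val k).1 (val k).2.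
Proof. by case: k => [[x y] hk]; rewrite /gen /=; apply: gen_X. Qed.

Lemma ev_gen (k : Cov P) : ev (gen R k) (val k).1 (val k).1 (val k).2 = 1.
Proof. by rewrite gen_E evX ?(cov_lt (covP k)) // !eqxx chain3E lexx (ltW (cov_lt (covP k))). Qed.

Definition phi (f : I3) : {ffun Cov P -> I3} :=
  [ffun k : Cov P => i3scale (ev f (val k).1 (val k).1 (val k).2) (gen R k)].

Lemma main : quot_iso phi.
Proof.
split.
- by move=> f _ k; exists (ev f (val k).1 (val k).1 (val k).2); rewrite ffunE.
- move=> c f g _ _; apply/ffunP => k; rewrite !ffunE ev_add ev_scale.
  by apply/ffunP => t; rewrite !ffunE mulrDl mulrA.
- move=> f g /Z32_good [f1 f2] /Z32_good [g1 g2]; apply/ffunP => k; rewrite !ffunE.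
  rewrite mul_scale gen_E XX ?(cov_lt (covP k)) // mul_xxy ?covP // f1 mul0r add0r.
  by rewrite -g2 ?covP.
- move=> h hh.
  pose cf (i : 'I_#|{: Cov P}|) := ev (h (enum_val i)) (val (enum_val i)).1
                                  (val (enum_val i)).1 (val (enum_val i)).2.
  pose s (i : 'I_#|{: Cov P}|) := X (val (enum_val i)).1 (val (enum_val i)).2.
  exists (\big[Add/Zero]_(i < #|{: Cov P}|) i3scale (cf i) (s i)).
    exists #|{: Cov P}|, cf, s; split => // i.
    have lt := cov_lt (covP (enum_val i)).
    by exists (E3 (val (enum_val i)).1 (val (enum_val i)).1 (val (enum_val i)).2),
      (E3 (val (enum_val i)).1 (val (enum_val i)).2 (val (enum_val i)).2);
      split; [|split]; try apply: J31_e3.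
  apply/ffunP => k; rewrite ffunE ev_big (@sum_eq1 _ _ _ (enum_rank k)) /=.
    rewrite ev_scale /s /cf enum_rankK -gen_E ev_gen mulr1.
    have [c ->] := hh k; by rewrite ev_scale ev_gen mulr1.
  move=> i _ ne; rewrite ev_scale /s evX ?(cov_lt (covP _)) // ind0 ?mulr0 //.
  apply/negP => /and3P[_ /eqP e1 /eqP e2]; move: ne.
  have ek : enum_val i = k.
    by apply: val_inj; rewrite [val k]surjective_pairing [val (enum_val i)]surjective_pairing e1 e2.
  by rewrite -ek enum_valK eqxx.
- move=> f Zf; have [f1 f2] := Z32_good Zf; split; last first.
    move=> Z3; apply/ffunP => k; rewrite !ffunE Z33_zero ?covP //.
    by apply/ffunP => t; rewrite !ffunE mul0r.
  move=> e.
  have hz : forall x y, cov1 (x, y) -> ev f x x y = 0.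
    move=> x y c; pose k : Cov P := exist _ (x, y) c.
    have := congr1 (fun F : {ffun Cov P -> I3} => ev (F k) x x y) e.
    by rewrite /= !ffunE ev_scale ev_zero (ev_gen k) mulr1.
  rewrite (decomp f); apply: span3_big => -[[[a b] c] h] _ /=.
  rewrite -(ev_chain f h).
  suff [->|Z] : ev f a b c = 0 \/ Z33 (E3 a b c).
  + have -> : i3scale 0 (E3 a b c) = Zero by apply/ffunP => t; rewrite !ffunE mul0r.
    exact: span3_zero.
  + exact: span3_scale.
  move: h; rewrite chain3E => /andP[hab hbc].
  case: (boolP (a == c)) => [/eqP eac | nac].
    subst c; have eab : b = a by apply/eqP; rewrite eq_le hbc hab.
    by subst b; left; apply: f1.
  have ac : a < c by rewrite lt_neqAle nac (le_trans hab hbc).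
  case: (boolP (cov1 (a, c))) => cv.
    left; case/orP: (cov_int cv hab hbc) => /eqP ->; first exact: hz.
    by rewrite -f2 // hz.
  right; have [m am mc] : exists2 m, a < m & m < c.
    case: (boolP [exists m, (a < m) && (m < c)]) => [/existsP[m /andP[]] | /existsPn H].
      by exists m.
    by case/negP: cv; apply: cov_intro => // m am mc; move: (H m); rewrite am mc.
  case: (boolP (b == a)) => [/eqP -> | nba]; first exact: E2_Z33 am mc.
  case: (boolP (b == c)) => [/eqP -> | nbc]; first exact: E3_Z33 am mc.
  by apply: E1_Z33; rewrite lt_def ?nba ?hab ?hbc // eq_sym nbc.
Qed.
End Work.

Unset Implicit Arguments.
Theorem proposition2p7 (d : Order.disp_t) (P : finPOrderType d) (R : comPzRingType) :
  exists phi : I3 P R -> {ffun Cov P -> I3 P R}, quot_iso phi.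
Proof. exact: (ex_intro _ _ (@main d P R)). Qed.
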